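(* In the setting described in the context (with any one of the three learning-rate setups (a), (b), (c)), there exist a deterministic constant $C$ and an integer $m_0$ such that for all $m\ge m_0$, $$\|z_{2,m}\|_m\le T_m\,C\,\big(\|w_{t_m}-w_*\|_m+1\big).$$
   Context: Setting. $\{Y_t\}_{t\ge0}$ is a Markov chain on a measurable space $\mathcal{Y}$ with transition kernel $P$ and unique stationary distribution $d_{\mathcal{Y}}$, with $\int|P^n(y,y')-d_{\mathcal{Y}}(y')|\,\mathrm{d}y'\le C_A\varrho^n$ for all $y,n$, some $\varrho\in[0,1)$. $H:\mathbb{R}^d\times\mathcal{Y}\to\mathbb{R}^d$, $h(w)=\mathbb{E}_{y\sim d_{\mathcal{Y}}}[H(w,y)]$; for some norm $\|\cdot\|$ and $\kappa\in[0,1)$, $\|h(w)-h(w')\|\le\kappa\|w-w'\|$, with fixed point $w_*$; $\|H(w,y)-H(w',y)\|\le L_h\|w-w'\|$ for all $w,w',y$ and $\sup_y\|H(0,y)\|<\infty$. Iterates: $w_0\in\mathbb{R}^d$, $w_{t+1}=w_t+\alpha_t(H(w_t,Y_{t+1})-w_t)$. Put $G(w,y)=H(w,y)-w$. Learning-rate setups with $C_\alpha>0$: (a) $\alpha_t=\frac{C_\alpha}{t+3}$, $T_m=\frac{C_\alpha\ln^{\nu_1}(m+3)}{m+3}$, $\nu_1\in(0,1)$; (b) $\alpha_t=\frac{C_\alpha}{(t+3)^\nu}$, $\nu\in(\frac23,1)$, $T_m=\frac{C_\alpha}{(m+3)^{\nu_2}}$, $\frac12<\nu_2<\frac\nu{2-\nu}$;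 (c) $\alpha_t=\frac{C_\alpha}{(t+3)\ln^\nu(t+3)}$, $\nu\in(0,1)$, $T_m=\frac{C_\alpha}{m+3}$. Anchors: $t_0=0$, $t_{m+1}=\min\{k:\sum_{t=t_m}^{k-1}\alpha_t\ge T_m\}$. Filtration $\mathcal{F}_t=\sigma(w_0,Y_1,\dots,Y_t)$, $\mathbb{E}_m[\cdot]=\mathbb{E}[\cdot\mid\mathcal{F}_{t_m}]$. Define $z_{2,m}=\sum_{t=t_m}^{t_{m+1}-1}\alpha_t\big(G(w_{t_m},Y_{t+1})-\mathbb{E}_m[G(w_{t_m},Y_{t+1})]\big)$. The norm $\|\cdot\|_m$: fix a norm $\|\cdot\|_s$ such that $\frac12\|\cdot\|_s^2$ is smooth w.r.t. $\|\cdot\|_s$ and $\xi>0$; $\|\cdot\|_m$ is the norm with $\frac12\|w\|_m^2=\inf_u\{\frac12\|u\|^2+\frac1{2\xi}\|w-u\|_s^2\}$. *)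

(* Defs.v *)
From HB Require Import structures.
From mathcomp Require Import all_boot all_order all_algebra.
From mathcomp Require Import all_classical all_reals all_analysis.
Set Implicit Arguments. Unset Strict Implicit. Unset Printing Implicit Defensive.
Import Order.TTheory GRing.Theory Num.Theory.
Import numFieldNormedType.Exports.
Local Open Scope classical_set_scope.
Local Open Scope ring_scope.

Definition is_norm (R : realType) (d : nat) (n : 'rV[R]_d -> R) : Prop :=
  (forall x, 0 <= n x) /\ (forall x, n x = 0 -> x = 0) /\
  (forall (a : R) x, n (a *: x) = `|a| * n x) /\
  (forall x y, n (x + y) <= n x + n y).

Definition dotp (R : realType) (d : nat) (x y : 'rV[R]_d) : R := (x *m y^T) 0 0.

(* (1/2) ns(.)^2 is L-smooth w.r.t. ns (for some L), i.e. it has a gradient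
   g with the quadratic upper bound (for the convex function 1/2 ns^2 this is
   equivalent to differentiability with ns-Lipschitz gradient). *)
Definition half_sq_smooth (R : realType) (d : nat) (ns : 'rV[R]_d -> R) : Prop :=
  exists (L : R) (g : 'rV[R]_d -> 'rV[R]_d), 0 < L /\
    forall x y, ns y ^+ 2 / 2 <=
      ns x ^+ 2 / 2 + dotp (g x) (y - x) + L / 2 * ns (y - x) ^+ 2.

(* Moreau-envelope norm: 1/2 ||w||_m^2 = inf_u {1/2 ||u||^2 + 1/(2 xi) ||w-u||_s^2} *)
Definition normm (R : realType) (d : nat) (nrm ns : 'rV[R]_d -> R) (xi : R)
  (w : 'rV[R]_d) : R :=
  Num.sqrt (2 * inf [set nrm u ^+ 2 / 2 + ns (w - u) ^+ 2 / (2 * xi) | u in [set: 'rV[R]_d]]).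

Definition vint (dY : measure_display) (Y : measurableType dY) (R : realType) (d : nat)
  (mu : {measure set Y -> \bar R}) (f : Y -> 'rV[R]_d) : 'rV[R]_d :=
  \row_i (\int[mu]_(y in [set: Y]) f y 0 i).

Definition kop (dY : measure_display) (Y : measurableType dY) (R : realType)
  (P : R.-pker Y ~> Y) (f : Y -> R) : Y -> R :=
  fun y => \int[P y]_(z in [set: Y]) f z.

Definition kpow (dY : measure_display) (Y : measurableType dY) (R : realType)
  (P : R.-pker Y ~> Y) (n : nat) (f : Y -> R) : Y -> R := iter n (kop P) f.

Fixpoint witer (dY : measure_display) (Y : measurableType dY) (R : realType) (d : nat)
  (H : 'rV[R]_d -> Y -> 'rV[R]_d) (alpha : nat -> R) (w0 : 'rV[R]_d)
  (Ys : nat -> Y) (t : nat) : 'rV[R]_d :=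
  match t with
  | 0 => w0
  | t'.+1 => let w := witer H alpha w0 Ys t' in
             w + alpha t' *: (H w (Ys t'.+1) - w)
  end.

Definition next_anchor (R : realType) (alpha : nat -> R) (Tm : R) (s : nat) : nat :=
  match pselect (exists k, `[< Tm <= \sum_(s <= t < k) alpha t >]) with
  | left H => ex_minn H
  | right _ => s
  end.

Fixpoint anchor (R : realType) (alpha : nat -> R) (T : nat -> R) (m : nat) : nat :=
  match m with
  | 0 => 0
  | m'.+1 => next_anchor alpha (T m') (anchor alpha T m')
  end.

Definition lr_setup (R : realType) (Calpha : R) (alpha T : nat -> R) : Prop :=
  (exists nu1 : R, 0 < nu1 < 1 /\
     (forall t, alpha t = Calpha / (t%:R + 3)) /\
     (forall m, T m = Calpha * (ln (m%:R + 3 : R)) `^ nu1 / (m%:R + 3)))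
  \/
  (exists nu nu2 : R, 2/3 < nu < 1 /\ 1/2 < nu2 < nu / (2 - nu) /\
     (forall t, alpha t = Calpha / (t%:R + 3) `^ nu) /\
     (forall m, T m = Calpha / (m%:R + 3) `^ nu2))
  \/
  (exists nu : R, 0 < nu < 1 /\
     (forall t, alpha t = Calpha / ((t%:R + 3) * (ln (t%:R + 3 : R)) `^ nu)) /\
     (forall m, T m = Calpha / (m%:R + 3))).

(* Main.v *)
Require Import Defs.
From HB Require Import structures.
From mathcomp Require Import all_boot all_order all_algebra.
From mathcomp Require Import all_classical all_reals all_analysis.
From mathcomp Require Import ring lra.
Import Order.TTheory GRing.Theory Num.Theory.
Import numFieldNormedType.Exports.
Local Open Scope classical_set_scope.
Local Open Scope ring_scope.


Section NormEq.
Variables (R : realType) (d : nat) (N : 'rV[R]_d -> R).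
Hypothesis hN : is_norm N.

Lemma nN0 : N 0 = 0.
Proof.
case: hN => _ [_ [hZ _]].
by rewrite -(scale0r (0 : 'rV[R]_d)) hZ normr0 mul0r.
Qed.

Lemma nN_ge0 x : 0 <= N x. Proof. by case: hN. Qed.

Lemma nNN x : N (- x) = N x.
Proof. case: hN => _ [_ [hZ _]]. by rewrite -scaleN1r hZ normrN normr1 mul1r. Qed.

Lemma nND x y : N (x + y) <= N x + N y. Proof. by case: hN => _ [_ [_ ]]. Qed.

Lemma nNZ a x : N (a *: x) = `|a| * N x. Proof. by case: hN => _ [_ [hZ _]]. Qed.

Lemma nNB x y : N (x - y) <= N x + N y.
Proof. by rewrite -(nNN y) nND. Qed.

Lemma nN_sum {I : Type} (r : seq I) (f : I -> 'rV[R]_d) :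
  N (\sum_(i <- r) f i) <= \sum_(i <- r) N (f i).
Proof.
elim: r => [|a r IH]; first by rewrite !big_nil nN0.
rewrite !big_cons; apply: (le_trans (nND _ _)); exact: lerD.
Qed.

Lemma entry_le_mx (x : 'rV[R]_d) i : `|x 0 i| <= `|x|.
Proof.
have /mapP[j Hj ->] : `|x 0 i| \in [seq `|x k.1 k.2| | k : 'I_1 * 'I_d].
  by apply/mapP; exists (0, i) => //=; rewrite mem_enum.
by rewrite [leRHS]/Num.norm /= mx_normrE; apply/bigmax_geP; right => /=; exists j.
Qed.

Lemma mx_le_entries (x : 'rV[R]_d) K : 0 <= K -> (forall i, `|x 0 i| <= K) -> `|x| <= K.
Proof.
move=> K0 hx; rewrite [leLHS]/Num.norm /= mx_normrE; apply/bigmax_leP; split => //.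
by move=> [i j] _ /=; rewrite (ord1 i); exact: hx.
Qed.

Lemma nN_le_mx : exists b, 0 <= b /\ forall x, N x <= b * `|x|.
Proof.
exists (\sum_(j < d) N (delta_mx 0 j)); split.
  by apply: sumr_ge0 => j _; exact: nN_ge0.
move=> x; rewrite {1}(row_sum_delta x); apply: (le_trans (nN_sum _ _)).
rewrite mulr_suml; apply: ler_sum => j _; rewrite nNZ mulrC.
apply: ler_wpM2l; [exact: nN_ge0 | exact: entry_le_mx].
Qed.

Lemma nN_cont : continuous N.
Proof.
have [b [b0 hb]] := nN_le_mx.
move=> x; apply/(@cvgrPdist_lt _ _ _ _ (nbhs_filter x)) => e e0.
apply/nbhs_ballP; exists (e / (b + 1)).
  by rewrite /= divr_gt0 // ltr_wpDl.
move=> y; rewrite -ball_normE /= => hxy.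
have h1 : `|N x - N y| <= N (x - y).
  have a1 := nND (y - x) x; rewrite subrK in a1.
  have a2 := nND (x - y) y; rewrite subrK in a2.
  have a3 : N (y - x) = N (x - y) by rewrite -opprB nNN.
  rewrite a3 in a1; rewrite ler_norml; apply/andP; split; lra.
apply: (le_lt_trans h1); apply: (le_lt_trans (hb _)).
apply: (@le_lt_trans _ _ ((b + 1) * `|x - y|)).
  by apply: ler_wpM2r => //; rewrite lerDl.
by rewrite -ltr_pdivlMl ?ltr_wpDl // mulrC.
Qed.

Lemma mx_le_nN : exists a, 0 < a /\ forall x, `|x| <= a * N x.
Proof.
pose S := [set x : 'rV[R]_d | `|x| = 1].
have cS : compact S.
  apply: bounded_closed_compact.
    exists 1; split => //= M M1 x; rewrite /S /= => ->; exact: ltW.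
  have := @preimage_closed _ _ (Num.norm : 'rV[R]_d -> R) [set 1] (fun x _ => @norm_continuous _ _ x) (@closed_eq R 1).
  by [].
case: (pselect (S !=set0)) => [S0|S0]; last first.
  exists 1; split => // x; case: (eqVneq x 0) => [->|x0].
    by rewrite normr0 mul1r nN_ge0.
  exfalso; apply: S0; exists (`|x|^-1 *: x); rewrite /S /= normrZ normrV ?unitfE ?normr_eq0 //.
  by rewrite normr_id mulVf // normr_eq0.
have [c cS' hc] := EVT_min_rV S0 cS (continuous_subspaceT nN_cont).
have Nc : 0 < N c.
  rewrite lt_neqAle nN_ge0 andbT; apply/eqP => /esym hc0.
  case: hN => _ [h0 _]; move: cS'; rewrite inE /S /= (h0 _ hc0) normr0 => /esym/eqP.
  by rewrite oner_eq0.
exists (N c)^-1; split; first by rewrite invr_gt0.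
move=> x; case: (eqVneq x 0) => [->|x0].
  by rewrite normr0 mulr_ge0 // ?invr_ge0 ?nN_ge0 // ltW.
have := hc (`|x|^-1 *: x); rewrite inE /S /= normrZ normrV ?unitfE ?normr_eq0 //.
rewrite normr_id mulVf ?normr_eq0 // => /(_ erefl).
rewrite nNZ normrV ?unitfE ?normr_eq0 // normr_id => h.
rewrite ler_pdivlMl // -ler_pdivlMr ?normr_gt0 // mulrC; exact: h.
Qed.

End NormEq.


Import HBNNSimple.
Lemma int_le1 (dT : measure_display) (T : measurableType dT) (R : realType)
  (mu : measure T R) (f : T -> \bar R) (K : R) :
  mu [set: T] = 1%E -> 0 <= K ->
  (forall x, (0 <= f x)%E /\ (f x <= K%:E)%E) -> (\int[mu]_(x in [set: T]) f x <= K%:E)%E.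
Proof.
move=> mu1 K0 hf.
rewrite ge0_integralTE; last by move=> x; case: (hf x).
apply: ge_ereal_sup => _ [h hfh <-].
have := integral_nnsfun mu measurableT h; rewrite patch_setT => <-.
apply: (@le_trans _ _ (\int[mu]_(x in [set: T]) (cst K%:E x))%E).
  apply: ge0_le_integral => //.
  - by move=> x _; rewrite lee_fin; exact: fun_ge0.
  - by apply/measurable_realfun.measurable_EFinP.
  - by move=> x _; apply: le_trans (hfh x) _; case: (hf x).
by rewrite integral_cst // mu1 mule1.
Qed.

Lemma Rint_bound (dT : measure_display) (T : measurableType dT) (R : realType)
  (mu : measure T R) (g : T -> R) (K : R) :
  mu [set: T] = 1%E -> 0 <= K ->
  (forall x, `|g x| <= K) -> `|\int[mu]_(x in [set: T]) g x| <= K.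
Proof.
move=> mu1 K0 hg.
rewrite /Rintegral integralE.
have hp : (\int[mu]_(x in [set: T]) ((EFin \o g)^\+ x) <= K%:E)%E.
  apply: int_le1 => // x; split; first exact: funepos_ge0.
  rewrite funeposE /= ge_max !lee_fin K0 andbT.
  exact: le_trans (ler_norm _) (hg x).
have hn : (\int[mu]_(x in [set: T]) ((EFin \o g)^\- x) <= K%:E)%E.
  apply: int_le1 => // x; split; first exact: funeneg_ge0.
  rewrite funenegE /= ge_max !lee_fin K0 andbT.
  have := hg x; rewrite -normrN; exact: le_trans (ler_norm _).
have hp0 : (0 <= \int[mu]_(x in [set: T]) ((EFin \o g)^\+ x))%E.
  by apply: integral_ge0 => x _; exact: funepos_ge0.
have hn0 : (0 <= \int[mu]_(x in [set: T]) ((EFin \o g)^\- x))%E.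
  by apply: integral_ge0 => x _; exact: funeneg_ge0.
move: hp hn hp0 hn0.
case: (\int[mu]_(x in [set: T]) ((EFin \o g)^\+ x))%E => [a| |] //;
case: (\int[mu]_(x in [set: T]) ((EFin \o g)^\- x))%E => [b| |] //.
rewrite !lee_fin => ha hb ha0 hb0 /=.
rewrite ler_norml; apply/andP; split; lra.
Qed.

Lemma kpow_bound (dY : measure_display) (Y : measurableType dY) (R : realType)
  (P : R.-pker Y ~> Y) (n : nat) (g : Y -> R) (K : R) :
  0 <= K -> (forall z, `|g z| <= K) -> forall y, `|kpow P n g y| <= K.
Proof.
move=> K0 hg; elim: n => [|n IH] y; first exact: hg.
rewrite /kpow /= /kop; apply: Rint_bound => //.
exact: prob_kernel.
Qed.


Section LR.
Variable R : realType.

Lemma expR1_le3 : expR (1 : R) <= 3.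
Proof.
have h := expR_ge1Dx (- (1/10) : R).
set y := expR (- (1/10) : R) in h.
have y0 : 0 < y by exact: expR_gt0.
have e : expR (- 1 : R) = y ^+ 10.
  by rewrite /y -expRM_natl; congr expR; lra.
have h2 : 81/100 <= y ^+ 2 by rewrite expr2; nra.
have h4 : 13/20 <= y ^+ 4.
  rewrite (_ : y ^+ 4 = y ^+ 2 * y ^+ 2); last by rewrite -exprD.
  apply: le_trans (_ : _ <= (81/100) * (81/100)) _; first nra.
  apply: ler_pM; lra.
have h8 : 21/50 <= y ^+ 8.
  rewrite (_ : y ^+ 8 = y ^+ 4 * y ^+ 4); last by rewrite -exprD.
  apply: le_trans (_ : _ <= (13/20) * (13/20)) _; first nra.
  apply: ler_pM; lra.
have h10 : 1/3 <= y ^+ 10.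
  rewrite (_ : y ^+ 10 = y ^+ 8 * y ^+ 2); last by rewrite -exprD.
  apply: le_trans (_ : _ <= (21/50) * (81/100)) _; first nra.
  apply: ler_pM; lra.
have e1 : expR (1 : R) = (expR (-1 : R))^-1 by rewrite expRN invrK.
rewrite e1 e -[3]invrK lef_pV2 ?posrE ?exprn_gt0 //; last lra.
Qed.

Lemma ln_ge1 (x : R) : 3 <= x -> 1 <= ln x.
Proof.
move=> hx; rewrite -[1](expRK (1:R)) ler_ln ?posrE ?expR_gt0 //; last lra.
exact: le_trans expR1_le3 hx.
Qed.

Lemma div_le (C a b : R) : 0 < C -> 0 < b -> b <= a -> C / a <= C / b.
Proof.
move=> C0 b0 ba; rewrite ler_pM2l // lef_pV2 ?posrE //; exact: lt_le_trans ba.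
Qed.

Lemma n3 (t : nat) : 3 <= (t%:R + 3 : R).
Proof. by rewrite lerDr. Qed.

Lemma n3pos (t : nat) : 0 < (t%:R + 3 : R).
Proof. by apply: lt_le_trans (n3 t); lra. Qed.

Lemma n3le (m t : nat) : (m <= t)%N -> (m%:R + 3 : R) <= t%:R + 3.
Proof. by move=> h; rewrite lerD2r ler_nat. Qed.

Lemma lr_facts (Calpha : R) alpha T : 0 < Calpha -> lr_setup Calpha alpha T ->
  (forall t, 0 < alpha t) /\ (forall m, 0 < T m) /\
  (forall m t, (m <= t)%N -> alpha t <= T m) /\
  (forall t, Calpha / ((t%:R + 3) * ln (t%:R + 3)) <= alpha t).
Proof.
move=> C0 [[nu1 [/andP[n10 n11] [ha hT]]]|[[nu [nu2 [/andP[n0 n1] [/andP[n20 n21] [ha hT]]]]]|[nu [/andP[n0 n1] [ha hT]]]]].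
- have L1 m : 1 <= ln (m%:R + 3 : R) `^ nu1.
    apply: le_trans (_ : 1 <= ln (m%:R + 3 : R) `^ 0) _; first by rewrite powRr0.
    apply: ler_powR; [exact: ln_ge1 _ (n3 m)| exact: ltW].
  split; [|split; [|split]].
  + by move=> t; rewrite ha divr_gt0 // n3pos.
  + move=> m; rewrite hT divr_gt0 ?n3pos // mulr_gt0 //; apply: lt_le_trans (L1 m); lra.
  + move=> m t mt; rewrite ha hT -mulrA (mulrC (_ `^ _)) mulrA.
    apply: le_trans (div_le _ _ _ C0 (n3pos m) (n3le _ _ mt)) _.
    rewrite -[leLHS]mulr1; apply: ler_wpM2l; last exact: L1.
    by rewrite divr_ge0 // ?ltW // n3pos.
  + move=> t; rewrite ha; apply: (div_le _ _ _ C0); first exact: n3pos.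
    rewrite -[leLHS]mulr1; apply: ler_wpM2l; [exact: ltW (n3pos t) | exact: ln_ge1 _ (n3 t)].
- have hnu2 : nu2 <= nu.
    have h1 : nu / (2 - nu) <= nu by rewrite ler_pdivrMr; [nra| lra].
    lra.
  split; [|split; [|split]].
  + by move=> t; rewrite ha divr_gt0 // powR_gt0 // n3pos.
  + by move=> m; rewrite hT divr_gt0 // powR_gt0 // n3pos.
  + move=> m t mt; rewrite ha hT; apply: (div_le _ _ _ C0); first by rewrite powR_gt0 // n3pos.
    apply: (@le_trans _ _ ((m%:R + 3) `^ nu)).
      apply: ler_powR => //; apply: le_trans (n3 m); lra.
    apply: ge0_ler_powR; [lra| |  |exact: n3le _ _ mt].
    * by rewrite nnegrE ltW // n3pos.
    * by rewrite nnegrE ltW // n3pos.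
  + move=> t; rewrite ha; apply: (div_le _ _ _ C0); first by rewrite powR_gt0 // n3pos.
    apply: (@le_trans _ _ (t%:R + 3)).
      apply: ler1_powR; [apply: le_trans (n3 t); lra | lra].
    rewrite -[leLHS]mulr1; apply: ler_wpM2l; [exact: ltW (n3pos t) | exact: ln_ge1 _ (n3 t)].
- have L1 t : 1 <= ln (t%:R + 3 : R) `^ nu.
    apply: le_trans (_ : 1 <= ln (t%:R + 3 : R) `^ 0) _; first by rewrite powRr0.
    apply: ler_powR; [exact: ln_ge1 _ (n3 t)| exact: ltW].
  have P1 t : 0 < ln (t%:R + 3 : R) `^ nu by apply: lt_le_trans (L1 t); lra.
  split; [|split; [|split]].
  + by move=> t; rewrite ha divr_gt0 // mulr_gt0 // n3pos.
  + by move=> m; rewrite hT divr_gt0 // n3pos.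
  + move=> m t mt; rewrite ha hT; apply: (div_le _ _ _ C0); first exact: n3pos.
    apply: le_trans (n3le _ _ mt) _; rewrite -[leLHS]mulr1; apply: ler_wpM2l; [exact: ltW (n3pos t) | exact: L1].
  + move=> t; rewrite ha; apply: (div_le _ _ _ C0); first by rewrite mulr_gt0 // n3pos.
    apply: ler_wpM2l; first exact: ltW (n3pos t).
    apply: ler1_powR; [exact: ln_ge1 _ (n3 t) | lra].
Qed.
End LR.


Section Anch.
Variable R : realType.

Lemma lnln_step (x : R) : 3 <= x -> ln (ln (x + 1)) - ln (ln x) <= 1 / (x * ln x).
Proof.
move=> x3.
have x0 : 0 < x by lra.
have b1 := ln_ge1 _ x x3.
have a1 := ln_ge1 _ (x + 1) ltac:(lra).
have ab : ln x <= ln (x + 1) by rewrite ler_ln ?posrE //; lra.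
have e1 : ln (x + 1) - ln x = ln (1 + 1 / x).
  rewrite -ln_div ?posrE //; try lra; congr ln; field; lra.
have h1 : ln (1 + 1 / x) <= 1 / x by apply: le_ln1Dx; rewrite (lt_le_trans _ (_ : 0 <= 1/x)) ?divr_ge0 //; lra.
have e2 : ln (ln (x + 1)) - ln (ln x) = ln (1 + (ln (x + 1) - ln x) / ln x).
  rewrite -ln_div ?posrE //; try lra; congr ln; field; lra.
rewrite e2; apply: le_trans (le_ln1Dx _) _.
  apply: lt_le_trans (_ : 0 <= (ln (x + 1) - ln x) / ln x); first lra.
  by rewrite divr_ge0 //; lra.
rewrite e1 (_ : 1 / (x * ln x) = (1 / x) / ln x); last by field; lra.
rewrite ler_pdivrMr; last lra.
by rewrite divfK //; lra.
Qed.

Lemma sum_lb (C : R) (alpha : nat -> R) (s k : nat) : 0 < C ->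
  (forall t, C / ((t%:R + 3) * ln (t%:R + 3)) <= alpha t) -> (s <= k)%N ->
  C * (ln (ln (k%:R + 3)) - ln (ln (s%:R + 3))) <= \sum_(s <= t < k) alpha t.
Proof.
move=> C0 hl; elim: k => [|k IH].
  by rewrite leqn0 => /eqP ->; rewrite big_geq // subrr mulr0.
rewrite leq_eqVlt => /orP [/eqP ->|hsk]; first by rewrite big_geq // subrr mulr0.
rewrite big_nat_recr //=.
have := IH hsk.
have st := lnln_step (k%:R + 3) (ltac:(rewrite lerDr //)).
have := hl k.
rewrite (_ : (k.+1)%:R + 3 = k%:R + 3 + 1 :> R); last by rewrite -addn1 natrD; lra.
rewrite -/(_ / _).
have -> : C / ((k%:R + 3) * ln (k%:R + 3)) = C * (1 / ((k%:R + 3) * ln (k%:R + 3))) by rewrite mul1r.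
move: st; set u := ln (ln (k%:R + 3 + 1)); set v := ln (ln (k%:R + 3)); set w := ln (ln (s%:R + 3)).
set q := 1 / _; move=> st h1 h2.
have : C * (u - v) <= C * q by apply: ler_wpM2l => //; lra.
lra.
Qed.

Lemma diverge (C : R) (alpha : nat -> R) : 0 < C ->
  (forall t, C / ((t%:R + 3) * ln (t%:R + 3)) <= alpha t) ->
  forall s (B : R), exists k, B <= \sum_(s <= t < k) alpha t.
Proof.
move=> C0 hl s B.
pose M := B / C + ln (ln (s%:R + 3)).
pose k := maxn s (Num.trunc (expR (expR M))).+1.
exists k.
have sk : (s <= k)%N by rewrite leq_maxl.
apply: le_trans (sum_lb _ _ _ _ C0 hl sk).
have hk : expR (expR M) <= k%:R + 3.
  apply: le_trans (ltW (truncnS_gt _)) _.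
  apply: le_trans (_ : k%:R <= k%:R + 3); last by rewrite lerDl.
  by rewrite ler_nat leq_maxr.
have h1 : expR M <= ln (k%:R + 3).
  by rewrite -ler_expR lnK // posrE; apply: lt_le_trans hk; exact: expR_gt0.
have h2 : M <= ln (ln (k%:R + 3)).
  by rewrite -ler_expR lnK // posrE; apply: lt_le_trans h1; exact: expR_gt0.
rewrite -ler_pdivrMl // mulrC.
rewrite /M in h2; lra.
Qed.

Lemma next_anchor_spec (alpha : nat -> R) (Tm : R) (s : nat) :
  0 < Tm -> (exists k, Tm <= \sum_(s <= t < k) alpha t) ->
  (forall t, (s <= t)%N -> alpha t <= Tm) ->
  (s < next_anchor alpha Tm s)%N /\ \sum_(s <= t < next_anchor alpha Tm s) alpha t <= Tm + Tm.
Proof.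
move=> T0 [k0 hk0] hal; rewrite /next_anchor.
case: pselect => [H|H]; last first.
  by exfalso; apply: H; exists k0; apply/asboolP.
case: ex_minnP => k /asboolP hk hmin.
have sk : (s < k)%N.
  rewrite ltnNge; apply/negP => ks; move: hk; rewrite big_geq //; lra.
split => //.
case: k hk hmin sk => [//|k] hk hmin sk.
rewrite big_nat_recr //=.
have hlt : \sum_(s <= t < k) alpha t < Tm.
  rewrite ltNge; apply/negP => hle.
  by have := hmin k (asboolT hle); rewrite ltnn.
have := hal k sk; lra.
Qed.

End Anch.

Lemma anchor_facts (R : realType) (alpha T : nat -> R) :
  (forall m, 0 < T m) -> (forall m t, (m <= t)%N -> alpha t <= T m) ->
  (forall s B, exists k, B <= \sum_(s <= t < k) alpha t) ->
  forall m, (m <= anchor alpha T m)%N /\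
    \sum_(anchor alpha T m <= t < anchor alpha T m.+1) alpha t <= T m + T m.
Proof.
move=> TP aT dv.
have key m : (m <= anchor alpha T m)%N ->
    (anchor alpha T m < anchor alpha T m.+1)%N /\
    \sum_(anchor alpha T m <= t < anchor alpha T m.+1) alpha t <= T m + T m.
  move=> hm; rewrite /=; apply: next_anchor_spec => //.
  move=> t ht; apply: aT; exact: leq_trans hm ht.
have ge m : (m <= anchor alpha T m)%N.
  elim: m => [//|m IH]; have [h _] := key m IH; exact: leq_ltn_trans IH h.
by move=> m; split => //; have [] := key m (ge m).
Qed.

Section Normm.
Variables (R : realType) (d : nat) (nrm ns : 'rV[R]_d -> R) (xi : R).
Hypotheses (hnrm : is_norm nrm) (hns : is_norm ns) (xi0 : 0 < xi).

Let S (x : 'rV[R]_d) := [set nrm u ^+ 2 / 2 + ns (x - u) ^+ 2 / (2 * xi) | u in [set: 'rV[R]_d]].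

Let S_lb x : has_lbound (S x).
Proof.
exists 0 => _ [u _ <-]; apply: addr_ge0; apply: divr_ge0; rewrite ?sqr_ge0 //; apply: mulr_ge0 => //; exact: ltW.
Qed.

Let S_ne x : S x !=set0.
Proof. by exists (nrm 0 ^+ 2 / 2 + ns (x - 0) ^+ 2 / (2 * xi)); exists 0. Qed.

Lemma normm_ge0 x : 0 <= normm nrm ns xi x.
Proof. exact: sqrtr_ge0. Qed.

Lemma normm_le x : normm nrm ns xi x <= nrm x.
Proof.
rewrite /normm.
have h : inf (S x) <= nrm x ^+ 2 / 2.
  apply: (ge_inf (S_lb x)); exists x => //; rewrite subrr (nN0 _ _ _ hns) expr0n /= mul0r addr0 //.
rewrite -(ger0_norm (nN_ge0 _ _ _ hnrm x)) -sqrtr_sqr ler_sqrt; last by rewrite sqr_ge0.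
rewrite -/(S x); lra.
Qed.

Lemma normm_ge : exists Q, 1 <= Q /\ forall x, nrm x <= Q * normm nrm ns xi x.
Proof.
have [b1 [b10 hb1]] := nN_le_mx _ _ _ hnrm.
have [a2 [a20 ha2]] := mx_le_nN _ _ _ hns.
pose k := b1 * a2.
have k0 : 0 <= k by rewrite mulr_ge0 // ltW.
have hk v : nrm v <= k * ns v.
  apply: le_trans (hb1 v) _; rewrite /k -mulrA; apply: ler_wpM2l => //.
pose Q := 4 + 4 * k ^+ 2 * xi.
have Q1 : 1 <= Q.
  have : 0 <= k ^+ 2 * xi by rewrite mulr_ge0 ?sqr_ge0 // ltW.
  rewrite /Q; lra.
exists Q; split => // x.
have hinf : nrm x ^+ 2 / Q <= inf (S x).
  apply: lb_le_inf => // _ [u _ <-].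
  set n := nrm x; set p := nrm u; set q := ns (x - u).
  have n0 : 0 <= n := nN_ge0 _ _ _ hnrm x.
  have p0 : 0 <= p := nN_ge0 _ _ _ hnrm u.
  have q0 : 0 <= q := nN_ge0 _ _ _ hns (x - u).
  have hn : n <= p + k * q.
    apply: le_trans (_ : nrm u + nrm (x - u) <= _).
      by have := nND _ _ _ hnrm u (x - u); rewrite addrC subrK.
    by rewrite lerD2l; apply: hk.
  have hn2 : n ^+ 2 <= 2 * p ^+ 2 + 2 * k ^+ 2 * q ^+ 2.
    have : n ^+ 2 <= (p + k * q) ^+ 2 by rewrite ler_sqr ?nnegrE // addr_ge0 // mulr_ge0.
    have : 0 <= (p - k * q) ^+ 2 by rewrite sqr_ge0.
    rewrite !expr2; nra.
  set r := q ^+ 2 / (2 * xi).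
  have xi2 : 0 < 2 * xi by rewrite mulr_gt0.
  have er : q ^+ 2 = 2 * xi * r by rewrite /r mulrC divfK // lt0r_neq0.
  have r0 : 0 <= r by rewrite /r divr_ge0 ?sqr_ge0 // ltW.
  have Q0 : 0 < Q by apply: lt_le_trans Q1; lra.
  rewrite ler_pdivrMr //.
  rewrite er in hn2.
  have kx : 0 <= k ^+ 2 * xi by apply: mulr_ge0; [exact: sqr_ge0 | exact: ltW].
  have : 0 <= k ^+ 2 * xi * r by apply: mulr_ge0.
  have : 0 <= p ^+ 2 by exact: sqr_ge0.
  move: kx.
  rewrite /Q; nra.
have i0 : 0 <= inf (S x).
  apply: le_trans hinf; rewrite divr_ge0 ?sqr_ge0 //; lra.
rewrite -ler_sqr ?nnegrE ?nN_ge0 //; last by rewrite mulr_ge0 ?normm_ge0 //; lra.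
rewrite exprMn /normm sqr_sqrtr; last by rewrite -/(S x); lra.
rewrite -/(S x).
have : nrm x ^+ 2 <= Q * inf (S x) by rewrite -ler_pdivrMl; [rewrite mulrC | lra].
have : 0 <= Q * inf (S x) by rewrite mulr_ge0 //; lra.
have : Q <= Q ^+ 2 by rewrite expr2 ler_peMl //; lra.
nra.
Qed.

End Normm.

Theorem lemma6 (R : realType) (d : nat) (dY : measure_display) (Y : measurableType dY)
  (P : R.-pker Y ~> Y) (piY : probability Y R) (CA rho : R)
  (H : 'rV[R]_d -> Y -> 'rV[R]_d) (nrm ns : 'rV[R]_d -> R) (kappa Lh xi : R)
  (wstar : 'rV[R]_d) (Calpha : R) (alpha T : nat -> R) :
  (* stationarity and uniqueness of the stationary distribution *)
  (forall A, measurable A -> (\int[piY]_y P y A = piY A)%E) ->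
  (forall mu : probability Y R,
      (forall A, measurable A -> (\int[mu]_y P y A = mu A)%E) ->
      forall A, measurable A -> mu A = piY A) ->
  (* geometric mixing in total variation (L1 distance) *)
  0 <= rho < 1 ->
  (forall (y : Y) (n : nat) (f : Y -> R), measurable_fun [set: Y] f ->
      (forall z, `|f z| <= 1) ->
      `|kpow P n f y - \int[piY]_(z in [set: Y]) f z| <= CA * rho ^+ n) ->
  (* H, h, norms *)
  (forall w (i : 'I_d), measurable_fun [set: Y] (fun y => H w y 0 i)) ->
  is_norm nrm ->
  0 <= kappa < 1 ->
  (forall w w', nrm (vint piY (H w) - vint piY (H w')) <= kappa * nrm (w - w')) ->
  vint piY (H wstar) = wstar ->
  (forall w w' y, nrm (H w y - H w' y) <= Lh * nrm (w - w')) ->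
  (exists B, forall y, nrm (H 0 y) <= B) ->
  is_norm ns -> half_sq_smooth ns -> 0 < xi ->
  (* learning rates *)
  0 < Calpha -> lr_setup Calpha alpha T ->
  exists (C : R) (m0 : nat), forall (w0 : 'rV[R]_d) (Ys : nat -> Y) (m : nat),
    (m0 <= m)%N ->
    let tm := anchor alpha T m in
    let wtm := witer H alpha w0 Ys tm in
    let G := fun (w : 'rV[R]_d) (y : Y) => H w y - w in
    let z2 := \sum_(tm <= t < anchor alpha T m.+1)
                alpha t *: (G wtm (Ys t.+1)
                  - \row_i kpow P (t.+1 - tm) (fun y => G wtm y 0 i) (Ys tm)) in
    normm nrm ns xi z2 <= T m * C * (normm nrm ns xi (wtm - wstar) + 1).
Proof.
move=> _ _ _ _ _ hnrm _ _ _ hLip [B hB] hns _ xi0 C0 hlr.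
have [aP [TP [aT alb]]] := lr_facts _ _ _ _ C0 hlr.
have dv := diverge _ _ _ C0 alb.
have anc := anchor_facts _ _ _ TP aT dv.
have [a1 [a1p ha1]] := mx_le_nN _ _ _ hnrm.
have [b1 [b1p hb1]] := nN_le_mx _ _ _ hnrm.
have [Q [Q1 hQ]] := normm_ge _ _ _ _ _ hnrm hns xi0.
pose C1 := a1 * ((`|Lh| + 1) * (Q + nrm wstar) + `|B|).
have Lh0 : 0 <= `|Lh| := normr_ge0 Lh.
have B0 : 0 <= `|B| := normr_ge0 B.
have ws00 : 0 <= nrm wstar := nN_ge0 _ _ _ hnrm wstar.
have C10 : 0 <= C1.
  apply: mulr_ge0; first exact: ltW.
  apply: addr_ge0 => //; apply: mulr_ge0; lra.
exists (4 * b1 * C1), 0%N => w0 Ys m _ /=.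
set s := anchor alpha T m.
set w := witer H alpha w0 Ys s.
set nm := normm nrm ns xi (w - wstar).
have nm0 : 0 <= nm by exact: normm_ge0.
have [_ hsum] := anc m.
rewrite -/s in hsum.
pose K := a1 * ((`|Lh| + 1) * nrm w + `|B|).
have nw0 : 0 <= nrm w := nN_ge0 _ _ _ hnrm w.
have K0 : 0 <= K.
  apply: mulr_ge0; first exact: ltW.
  apply: addr_ge0 => //; apply: mulr_ge0; lra.
have hG y : `|H w y - w| <= K.
  apply: le_trans (ha1 _) _; rewrite /K; apply: ler_wpM2l; first exact: ltW.
  have h1 : nrm (H w y) <= `|Lh| * nrm w + `|B|.
    have := nND _ _ _ hnrm (H w y - H 0 y) (H 0 y); rewrite subrK => h.
    apply: le_trans h _; apply: lerD.
      apply: le_trans (hLip w 0 y) _; rewrite subr0; apply: ler_wpM2r => //; exact: ler_norm.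
    exact: le_trans (hB y) (ler_norm _).
  apply: le_trans (nNB _ _ _ hnrm _ _) _; lra.
have hrow n : `|\row_i kpow P n (fun y => (H w y - w) 0 i) (Ys s)| <= K.
  apply: mx_le_entries => // i; rewrite mxE; apply: kpow_bound => // z.
  exact: le_trans (entry_le_mx _ _ _ _) (hG z).
have hterm t : nrm (H w (Ys t.+1) - w - \row_i kpow P (t.+1 - s) (fun y => (H w y - w) 0 i) (Ys s)) <= b1 * (K + K).
  apply: le_trans (hb1 _) _; apply: ler_wpM2l => //.
  apply: le_trans (ler_normB _ _) _; apply: lerD; [exact: hG | exact: hrow].
apply: le_trans (normm_le _ _ _ _ _ hnrm hns xi0 _) _.
apply: le_trans (nN_sum _ _ _ hnrm _ _) _.
apply: le_trans (_ : \sum_(s <= t < anchor alpha T m.+1) alpha t * (b1 * (K + K)) <= _).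
  apply: ler_sum => t _; rewrite (nNZ _ _ _ hnrm) ger0_norm; last exact: ltW.
  apply: ler_wpM2l; [exact: ltW | exact: hterm].
rewrite -mulr_suml.
have hK : K <= C1 * (nm + 1).
  have hw : nrm w <= Q * nm + nrm wstar.
    have := nND _ _ _ hnrm (w - wstar) wstar; rewrite subrK => h.
    apply: le_trans h _; rewrite lerD2r; exact: hQ.
  rewrite /K /C1 -mulrA; apply: ler_wpM2l; first exact: ltW.
  have L0 : 0 <= `|Lh| + 1 by lra.
  have ws0 : 0 <= nrm wstar := nN_ge0 _ _ _ hnrm wstar.
  have : (`|Lh| + 1) * nrm w <= (`|Lh| + 1) * (Q * nm + nrm wstar) by apply: ler_wpM2l.
  have : 0 <= (`|Lh| + 1) * (Q * nm) by rewrite mulr_ge0 // mulr_ge0 //; lra.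
  have : 0 <= `|B| * nm by rewrite mulr_ge0.
  have : 0 <= (`|Lh| + 1) * nrm wstar * nm by rewrite !mulr_ge0.
  have : (`|Lh| + 1) * (Q * nm) <= (`|Lh| + 1) * Q * nm by rewrite mulrA.
  nra.
have S0 : 0 <= \sum_(s <= t < anchor alpha T m.+1) alpha t.
  by apply: sumr_ge0 => t _; exact: ltW.
have Tm0 := TP m.
apply: le_trans (_ : (T m + T m) * (b1 * (K + K)) <= _).
  apply: ler_wpM2r => //; rewrite mulr_ge0 //; lra.
have : b1 * K <= b1 * (C1 * (nm + 1)) by apply: ler_wpM2l.
have hbK : 0 <= b1 * K := mulr_ge0 b1p K0.
have : 0 <= T m * (b1 * K) := mulr_ge0 (ltW Tm0) hbK.
move: hbK.
nra.
Qed.
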